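(* Let $n\ge 2$ and let $\sigma,\delta,\tau\in\mathbb{C}$ with $\sigma\tau\neq 0$. Let $T=(n;\sigma,\delta,\tau)$ and let $\lambda_h=\delta+2\sqrt{\sigma\tau}\cos\frac{h\pi}{n+1}$, $h=1,\dots,n$, be its eigenvalues. Then \[ \min_{\lambda_j\neq\lambda_h}|\lambda_h-\lambda_j|= \begin{cases} 4\sqrt{|\sigma\tau|}\,\sin\frac{\pi}{2(n+1)}\sin\frac{(2h-1)\pi}{2(n+1)}, & \text{for } 1<h\le \frac n2 \text{ or } h=n,\\[1mm] 4\sqrt{|\sigma\tau|}\,\sin\frac{\pi}{2(n+1)}\sin\frac{(2h+1)\pi}{2(n+1)}, & \text{for } h=1 \text{ or } \frac n2<h<n. \end{cases} \] In particular, the distance of $\lambda_h$ to the other eigenvalues of $T$ depends only on $h$, $n$ and $|\sigma\tau|$. Moreover, the minimal distance between any two distinct eigenvalues of $T$ equals $4\sqrt{|\sigma\tau|}\sin\frac{\pi}{2(n+1)}\sin\frac{3\pi}{2(n+1)}$, and it is achieved by $|\lambda_1-\lambda_2|$ and by $|\lambda_{n-1}-\lambda_n|$.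
   Context: For $\sigma,\delta,\tau\in\mathbb{C}$, $T=(n;\sigma,\delta,\tau)$ denotes the $n\times n$ tridiagonal Toeplitz matrix with all diagonal entries equal to $\delta$, all superdiagonal entries equal to $\tau$ and all subdiagonal entries equal to $\sigma$. For $\sigma\tau\ne0$ its eigenvalues are $\lambda_h=\delta+2\sqrt{\sigma\tau}\cos\frac{h\pi}{n+1}$, $h=1,\dots,n$, for a fixed choice of the square root; they are simple. *)

(* Defs.v *)
From Stdlib Require Import Reals.
From Coquelicot Require Import Coquelicot.
Open Scope R_scope.

(* Eigenvalues of the tridiagonal Toeplitz matrix T = (n; sigma, delta, tau),
   sigma*tau <> 0:  lambda_h = delta + 2 s cos(h pi/(n+1)), h = 1..n,
   where s is a fixed square root of sigma*tau (s*s = sigma*tau). *)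
Definition toep_eig (delta s : C) (n h : nat) : C :=
  (delta + 2 * s * RtoC (cos (INR h * PI / INR (n + 1))))%C.

Definition is_min_dist (lam : nat -> C) (n h : nat) (d : R) : Prop :=
  (exists j : nat, (1 <= j <= n)%nat /\ lam j <> lam h /\ Cmod (lam h - lam j)%C = d) /\
  (forall j : nat, (1 <= j <= n)%nat -> lam j <> lam h -> d <= Cmod (lam h - lam j)%C).

(* Main.v *)
Require Import Defs.
From Stdlib Require Import Reals Lra Lia.
From Coquelicot Require Import Coquelicot.
Open Scope R_scope.

Definition G (t : R) (k : nat) := cos (INR k * t).

Section S.
Variables (n : nat) (t : R).
Hypothesis Hn : (2 <= n)%nat.
Hypothesis tpos : 0 < t.
Hypothesis Ht : INR (n + 1) * t = PI.

Lemma N_eq : INR (n + 1) = INR n + 1.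
Proof. rewrite plus_INR; simpl; lra. Qed.

Lemma n_ge2 : 2 <= INR n.
Proof. apply (le_INR 2) in Hn; simpl in Hn; lra. Qed.

Lemma adj k : G t k - G t (S k) = 2 * sin (t / 2) * sin ((2 * INR k + 1) * t / 2).
Proof.
  unfold G. rewrite form2, S_INR.
  replace ((INR k * t - (INR k + 1) * t) / 2) with (- (t / 2)) by field.
  rewrite sin_neg.
  replace ((INR k * t + (INR k + 1) * t) / 2) with ((2 * INR k + 1) * t / 2) by field.
  ring.
Qed.

Lemma t_small : t <= PI / 3.
Proof. pose proof n_ge2. rewrite N_eq in Ht. nra. Qed.

Lemma sin_half_pos : 0 < sin (t / 2).
Proof. pose proof t_small. pose proof PI_RGT_0. apply sin_gt_0; lra. Qed.

Lemma adj_pos k : (k <= n)%nat -> 0 < G t k - G t (S k).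
Proof.
  intros Hk. rewrite adj. pose proof sin_half_pos.
  assert (0 < sin ((2 * INR k + 1) * t / 2)).
  { apply le_INR in Hk. pose proof (pos_INR k). rewrite N_eq in Ht. apply sin_gt_0; nra. }
  nra.
Qed.

Lemma mono i j : (i <= j)%nat -> (j <= n + 1)%nat -> G t j <= G t i.
Proof.
  intros Hij Hj. destruct (Nat.eq_dec i j) as [->|Hne]; [lra|].
  assert (Hlt : (i < j)%nat) by lia.
  apply lt_INR in Hlt. apply le_INR in Hj. pose proof (pos_INR i).
  unfold G. left. apply cos_decreasing_1; nra.
Qed.

Lemma cmp h : (1 <= h)%nat -> G t (h + 1) + G t (h - 1) = 2 * G t h * cos t.
Proof.
  intros Hh. unfold G. rewrite plus_INR, minus_INR by lia. simpl INR.
  replace ((INR h + 1) * t) with (INR h * t + t) by ring.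
  replace ((INR h - 1) * t) with (INR h * t - t) by ring.
  rewrite cos_plus, cos_minus. ring.
Qed.

Lemma sign_pos h : (2 * h <= n + 1)%nat -> 0 <= G t h.
Proof.
  intros H. apply le_INR in H. rewrite mult_INR in H. simpl INR in H.
  pose proof (pos_INR h). pose proof PI_RGT_0.
  unfold G. apply cos_ge_0; nra.
Qed.

Lemma sign_neg h : (n + 1 <= 2 * h)%nat -> (h <= n + 1)%nat -> G t h <= 0.
Proof.
  intros H H2. apply le_INR in H. apply le_INR in H2. rewrite mult_INR in H. simpl INR in H.
  pose proof (pos_INR h). pose proof PI_RGT_0.
  unfold G. apply cos_le_0; nra.
Qed.

Lemma sin_bound i : (1 <= i)%nat -> (i + 1 <= n)%nat ->
  sin (3 * t / 2) <= sin ((2 * INR i + 1) * t / 2).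
Proof.
  intros H1 H2. apply le_INR in H1. apply le_INR in H2. rewrite plus_INR in H2. simpl INR in *.
  rewrite N_eq in Ht. pose proof PI_RGT_0.
  destruct (Rle_dec ((2 * INR i + 1) * t / 2) (PI / 2)).
  - apply sin_incr_1; nra.
  - rewrite <- (sin_PI_x ((2 * INR i + 1) * t / 2)). apply sin_incr_1; nra.
Qed.

Variables (lam : nat -> C) (m : R).
Hypothesis mpos : 0 < m.
Hypothesis dist : forall i j, Cmod (lam i - lam j)%C = 2 * m * Rabs (G t i - G t j).

Lemma ne_of_pos i j d : Cmod (lam i - lam j)%C = d -> 0 < d -> lam j <> lam i.
Proof.
  intros E P Heq. rewrite Heq in E.
  replace (lam i - lam i)%C with (RtoC 0) in E by ring. rewrite Cmod_0 in E. lra.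
Qed.

Lemma min_minus h : (2 <= h <= n)%nat -> ((2 * h <= n + 1)%nat \/ h = n) ->
  is_min_dist lam n h (2 * m * (G t (h - 1) - G t h)).
Proof.
  intros Hh Hc.
  assert (P : 0 < G t (h - 1) - G t h).
  { replace h with (S (h - 1)) at 2 by lia. apply adj_pos; lia. }
  split.
  - exists (h - 1)%nat. split; [lia|].
    assert (E : Cmod (lam h - lam (h - 1))%C = 2 * m * (G t (h - 1) - G t h)).
    { rewrite dist, Rabs_minus_sym, Rabs_pos_eq; lra. }
    split; [|exact E]. eapply ne_of_pos; [exact E| nra].
  - intros j Hj Hne. assert (j <> h) by (intro; subst; congruence).
    rewrite dist. destruct (Nat.lt_ge_cases j h).
    + assert (G t (h - 1) <= G t j) by (apply mono; lia).
      rewrite Rabs_minus_sym, Rabs_pos_eq; nra.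
    + assert (2 * h <= n + 1)%nat by lia.
      assert (G t j <= G t (h + 1)) by (apply mono; lia).
      pose proof (cmp h ltac:(lia)). pose proof (sign_pos h ltac:(assumption)).
      pose proof (COS_bound t).
      assert (G t j <= G t h) by (apply mono; lia).
      assert (0 <= G t h * (1 - cos t)) by (apply Rmult_le_pos; lra).
      rewrite Rabs_pos_eq by lra.
      apply Rmult_le_compat_l; lra.
Qed.

Lemma min_plus h : (1 <= h < n)%nat -> ((n + 1 <= 2 * h)%nat \/ h = 1%nat) ->
  is_min_dist lam n h (2 * m * (G t h - G t (h + 1))).
Proof.
  intros Hh Hc.
  assert (P : 0 < G t h - G t (h + 1)).
  { rewrite Nat.add_1_r. apply adj_pos; lia. }
  split.
  - exists (h + 1)%nat. split; [lia|].
    assert (E : Cmod (lam h - lam (h + 1))%C = 2 * m * (G t h - G t (h + 1))).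
    { rewrite dist, Rabs_pos_eq; lra. }
    split; [|exact E]. eapply ne_of_pos; [exact E| nra].
  - intros j Hj Hne. assert (j <> h) by (intro; subst; congruence).
    rewrite dist. destruct (Nat.lt_ge_cases j h).
    + assert (n + 1 <= 2 * h)%nat by lia.
      assert (G t (h - 1) <= G t j) by (apply mono; lia).
      pose proof (cmp h ltac:(lia)). pose proof (sign_neg h ltac:(assumption) ltac:(lia)).
      pose proof (COS_bound t).
      assert (G t h <= G t j) by (apply mono; lia).
      assert (0 <= - G t h * (1 - cos t)) by (apply Rmult_le_pos; lra).
      rewrite Rabs_minus_sym, Rabs_pos_eq by lra.
      apply Rmult_le_compat_l; lra.
    + assert (G t j <= G t (h + 1)) by (apply mono; lia).
      assert (G t j <= G t h) by (apply mono; lia).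
      rewrite Rabs_pos_eq; nra.
Qed.

Lemma glob i j : (1 <= i <= n)%nat -> (1 <= j <= n)%nat -> i <> j ->
  4 * m * sin (t / 2) * sin (3 * t / 2) <= Cmod (lam i - lam j)%C.
Proof.
  intros Hi Hj Hij. rewrite dist.
  assert (K : forall a b, (1 <= a)%nat -> (a < b <= n)%nat ->
     4 * m * sin (t / 2) * sin (3 * t / 2) <= 2 * m * (G t a - G t b)).
  { intros a b Ha Hb. assert (G t b <= G t (S a)) by (apply mono; lia).
    pose proof (adj a). pose proof (sin_bound a Ha ltac:(lia)). pose proof sin_half_pos.
    assert (0 < 2 * m * sin (t / 2)) by nra.
    nra. }
  destruct (Nat.lt_ge_cases i j).
  - assert (G t j <= G t i) by (apply mono; lia).
    rewrite Rabs_pos_eq by lra. apply K; lia.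
  - assert (G t i <= G t j) by (apply mono; lia).
    rewrite Rabs_minus_sym, Rabs_pos_eq by lra. apply K; lia.
Qed.
End S.

Lemma lam_diff delta s n i j :
  Cmod (toep_eig delta s n i - toep_eig delta s n j)%C =
  2 * Cmod s * Rabs (cos (INR i * PI / INR (n + 1)) - cos (INR j * PI / INR (n + 1))).
Proof.
  unfold toep_eig.
  replace (delta + 2 * s * RtoC (cos (INR i * PI / INR (n + 1))) -
     (delta + 2 * s * RtoC (cos (INR j * PI / INR (n + 1)))))%C
  with (RtoC 2 * s * RtoC (cos (INR i * PI / INR (n + 1)) - cos (INR j * PI / INR (n + 1))))%C.
  2:{ rewrite RtoC_minus. ring. }
  rewrite !Cmod_mult, !Cmod_R, (Rabs_pos_eq 2); lra.
Qed.

Theorem proposition1 (n : nat) (sigma delta tau s : C) :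
  (2 <= n)%nat ->
  (sigma * tau)%C <> RtoC 0 ->
  (s * s)%C = (sigma * tau)%C ->
  let lam := toep_eig delta s n in
  let c := 4 * sqrt (Cmod (sigma * tau)%C) * sin (PI / (2 * INR (n + 1))) in
  (forall h : nat, (1 <= h <= n)%nat ->
     (((1 < h)%nat /\ (2 * h <= n)%nat) \/ h = n ->
        is_min_dist lam n h (c * sin ((2 * INR h - 1) * PI / (2 * INR (n + 1))))) /\
     (h = 1%nat \/ ((n < 2 * h)%nat /\ (h < n)%nat) ->
        is_min_dist lam n h (c * sin ((2 * INR h + 1) * PI / (2 * INR (n + 1)))))) /\
  (let d := c * sin (3 * PI / (2 * INR (n + 1))) in
   (forall i j : nat, (1 <= i <= n)%nat -> (1 <= j <= n)%nat -> lam i <> lam j ->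
      d <= Cmod (lam i - lam j)%C) /\
   Cmod (lam 1%nat - lam 2%nat)%C = d /\
   Cmod (lam (n - 1)%nat - lam n)%C = d).
Proof.
  intros Hn Hst Hss lam c.
  assert (Npos : 0 < INR (n + 1)) by (apply lt_0_INR; lia).
  pose proof PI_RGT_0 as PIpos.
  set (t := PI / INR (n + 1)) in *.
  assert (Ht : INR (n + 1) * t = PI) by (unfold t; field; lra).
  assert (tpos : 0 < t) by (unfold t; apply Rdiv_lt_0_compat; lra).
  assert (Hm : Cmod s = sqrt (Cmod (sigma * tau))).
  { rewrite <- Hss, Cmod_mult, sqrt_square; [reflexivity|apply Cmod_ge_0]. }
  assert (mpos : 0 < Cmod s).
  { apply Cmod_gt_0. intro E. apply Hst. rewrite <- Hss, E. ring. }
  assert (dist : forall i j, Cmod (lam i - lam j)%C = 2 * Cmod s * Rabs (G t i - G t j)).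
  { intros i j. unfold lam. rewrite lam_diff. unfold G, t, Rdiv. rewrite !Rmult_assoc. reflexivity. }
  assert (Hc : c = 4 * Cmod s * sin (t / 2)).
  { unfold c. rewrite Hm. replace (PI / (2 * INR (n + 1))) with (t / 2) by (unfold t; field; lra).
    reflexivity. }
  rewrite Hc. clear Hc c.
  split.
  - intros h Hh. split.
    + intros Hcase.
      replace (4 * Cmod s * sin (t / 2) * sin ((2 * INR h - 1) * PI / (2 * INR (n + 1))))
        with (2 * Cmod s * (G t (h - 1) - G t h)).
      * apply (min_minus n t Hn tpos Ht lam (Cmod s) mpos dist); lia.
      * replace h with (S (h - 1)) at 2 by lia. rewrite adj.
        replace ((2 * INR h - 1) * PI / (2 * INR (n + 1))) with ((2 * INR (h - 1) + 1) * t / 2).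
        { ring. }
        rewrite minus_INR by lia. simpl INR. rewrite <- Ht. field. lra.
    + intros Hcase.
      replace (4 * Cmod s * sin (t / 2) * sin ((2 * INR h + 1) * PI / (2 * INR (n + 1))))
        with (2 * Cmod s * (G t h - G t (h + 1))).
      * apply (min_plus n t Hn tpos Ht lam (Cmod s) mpos dist); lia.
      * rewrite Nat.add_1_r, adj.
        replace ((2 * INR h + 1) * PI / (2 * INR (n + 1))) with ((2 * INR h + 1) * t / 2).
        { ring. }
        rewrite <- Ht. field. lra.
  - intros d.
    assert (Hd : d = 4 * Cmod s * sin (t / 2) * sin (3 * t / 2)).
    { unfold d. replace (3 * PI / (2 * INR (n + 1))) with (3 * t / 2) by (rewrite <- Ht; field; lra).
      reflexivity. }
    rewrite Hd. clear Hd d.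
    pose proof (sin_half_pos n t Hn tpos Ht) as Sh.
    split; [|split].
    + intros i j Hi Hj Hne. apply (glob n t Hn tpos Ht lam (Cmod s) mpos dist); try lia.
      intro E; subst; congruence.
    + rewrite dist. rewrite Rabs_pos_eq.
      * rewrite adj. simpl INR. replace (2 * 1 + 1) with 3 by ring. ring.
      * left. apply (adj_pos n t Hn tpos Ht). lia.
    + rewrite dist. replace (G t n) with (G t (S (n - 1))) by (f_equal; lia). rewrite Rabs_pos_eq.
      * rewrite adj.
        replace ((2 * INR (n - 1) + 1) * t / 2) with (PI - 3 * t / 2).
        { rewrite sin_PI_x. ring. }
        rewrite minus_INR by lia. rewrite <- Ht, (N_eq n). simpl INR. field.
      * left. apply (adj_pos n t Hn tpos Ht). lia.
Qed.
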